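(* If $G$ and $H$ are graphs without isolated vertices, then $$\rho(G\times H)\geq\max\{\rho_o(G)\rho(H),\ \rho_o(H)\rho(G)\}.$$
   Context: All graphs are finite and simple. A packing of $G$ is a set $P\subseteq V(G)$ with $N[u]\cap N[v]=\emptyset$ for all distinct $u,v\in P$ ($N[\cdot]$ the closed neighborhood); $\rho(G)$ is the maximum size of a packing. An open packing is a set whose vertices have pairwise disjoint open neighborhoods; $\rho_o(G)$ is its maximum size. The direct product $G\times H$ has vertex set $V(G)\times V(H)$, with $(g,h)$ adjacent to $(g',h')$ iff $gg'\in E(G)$ and $hh'\in E(H)$. *)

(* Defs.v *)
From mathcomp Require Import all_boot.
Set Implicit Arguments. Unset Strict Implicit. Unset Printing Implicit Defensive.

Definition simple_graph (T : finType) (e : rel T) : Prop :=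
  symmetric e /\ irreflexive e.

Definition open_nbhd (T : finType) (e : rel T) (v : T) : {set T} :=
  [set w | e v w].
Definition closed_nbhd (T : finType) (e : rel T) (v : T) : {set T} :=
  v |: open_nbhd e v.

Definition no_isolated (T : finType) (e : rel T) : Prop :=
  forall v : T, exists w : T, e v w.

Definition packing (T : finType) (e : rel T) (P : {set T}) : bool :=
  [forall u in P, forall v in P,
     (u != v) ==> [disjoint closed_nbhd e u & closed_nbhd e v]].

Definition open_packing (T : finType) (e : rel T) (P : {set T}) : bool :=
  [forall u in P, forall v in P,
     (u != v) ==> [disjoint open_nbhd e u & open_nbhd e v]].

Definition packing_number (T : finType) (e : rel T) : nat :=
  \max_(P : {set T} | packing e P) #|P|.
Definition open_packing_number (T : finType) (e : rel T) : nat :=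
  \max_(P : {set T} | open_packing e P) #|P|.

Definition direct_prod (T1 T2 : finType) (e1 : rel T1) (e2 : rel T2)
  : rel (T1 * T2)%type :=
  fun x y => e1 x.1 y.1 && e2 x.2 y.2.

(* Main.v *)
Require Import Defs.
From mathcomp Require Import all_boot.

Lemma disjP (T : finType) (A B : {set T}) :
  reflect (forall x, x \in A -> x \in B -> False) [disjoint A & B].
Proof.
apply: (iffP pred0P) => H x /=.
- by move=> hA hB; have := H x; rewrite /= hA hB.
- by apply/negbTE/negP => /andP[]; exact: H.
Qed.

Lemma cl_inE (T : finType) (e : rel T) v x :
  (x \in closed_nbhd e v) = (x == v) || e v x.
Proof. by rewrite /closed_nbhd /open_nbhd !inE. Qed.

Lemma prodpack (T1 T2 : finType) (e1 : rel T1) (e2 : rel T2)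
  (O : {set T1}) (P : {set T2}) :
  simple_graph e2 -> open_packing e1 O -> packing e2 P ->
  packing (direct_prod e1 e2) (setX O P).
Proof.
move=> [s2 i2] hO hP.
have hO' : forall a b x, a \in O -> b \in O -> e1 a x -> e1 b x -> a = b.
  move=> a b x aO bO ax bx; apply/eqP; apply/negPn/negP => nab.
  move/disjP: (implyP (forall_inP (forall_inP hO a aO) b bO) nab); apply.
    by rewrite /open_nbhd inE; exact: ax.
  by rewrite /open_nbhd inE; exact: bx.
have hP' : forall p q y, p \in P -> q \in P ->
    y \in closed_nbhd e2 p -> y \in closed_nbhd e2 q -> p = q.
  move=> p q y pP qP yp yq; apply/eqP; apply/negPn/negP => npq.
  move/disjP: (implyP (forall_inP (forall_inP hP p pP) q qP) npq); apply.
    exact: yp.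
  exact: yq.
apply/forall_inP => -[a p]; rewrite inE /= => /andP[aO pP].
apply/forall_inP => -[b q]; rewrite inE /= => /andP[bO qP].
apply/implyP => neq; apply/disjP => -[x y]; rewrite !cl_inE /direct_prod /=.
case/orP => [/eqP [-> ->] | /andP[ax py]]; case/orP => [/eqP [eb eq] | /andP[bx qy]].
- by subst; rewrite eqxx in neq.
- have epq : p = q by apply: (hP' p q p) => //; rewrite cl_inE ?eqxx // qy orbT.
  by subst; rewrite i2 in qy.
- have epq : p = q by apply: (hP' p q q) => //; subst; rewrite cl_inE ?eqxx // py orbT.
  by subst; rewrite i2 in py.
- have eab := hO' a b x aO bO ax bx; subst b.
  have epq : p = q by apply: (hP' p q y) => //; rewrite cl_inE ?py ?qy orbT.
  by subst; rewrite eqxx in neq.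
Qed.

Lemma prodpack2 (T1 T2 : finType) (e1 : rel T1) (e2 : rel T2)
  (P : {set T1}) (O : {set T2}) :
  simple_graph e1 -> packing e1 P -> open_packing e2 O ->
  packing (direct_prod e1 e2) (setX P O).
Proof.
move=> [s1 i1] hP hO.
have hO' : forall a b x, a \in O -> b \in O -> e2 a x -> e2 b x -> a = b.
  move=> a b x aO bO ax bx; apply/eqP; apply/negPn/negP => nab.
  move/disjP: (implyP (forall_inP (forall_inP hO a aO) b bO) nab); apply.
    by rewrite /open_nbhd inE; exact: ax.
  by rewrite /open_nbhd inE; exact: bx.
have hP' : forall p q y, p \in P -> q \in P ->
    y \in closed_nbhd e1 p -> y \in closed_nbhd e1 q -> p = q.
  move=> p q y pP qP yp yq; apply/eqP; apply/negPn/negP => npq.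
  move/disjP: (implyP (forall_inP (forall_inP hP p pP) q qP) npq); apply.
    exact: yp.
  exact: yq.
apply/forall_inP => -[p a]; rewrite inE /= => /andP[pP aO].
apply/forall_inP => -[q b]; rewrite inE /= => /andP[qP bO].
apply/implyP => neq; apply/disjP => -[y x]; rewrite !cl_inE /direct_prod /=.
case/orP => [/eqP [-> ->] | /andP[py ax]]; case/orP => [/eqP [eq eb] | /andP[qy bx]].
- by subst; rewrite eqxx in neq.
- have epq : p = q by apply: (hP' p q p) => //; rewrite cl_inE ?eqxx // qy orbT.
  by subst; rewrite i1 in qy.
- have epq : p = q by apply: (hP' p q q) => //; subst; rewrite cl_inE ?eqxx // py orbT.
  by subst; rewrite i1 in py.
- have eab := hO' a b x aO bO ax bx; subst b.
  have epq : p = q by apply: (hP' p q y) => //; rewrite cl_inE ?py ?qy orbT.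
  by subst; rewrite eqxx in neq.
Qed.

Lemma pack0 (T : finType) (e : rel T) : packing e set0.
Proof. by apply/forall_inP => u; rewrite inE. Qed.

Lemma opack0 (T : finType) (e : rel T) : open_packing e set0.
Proof. by apply/forall_inP => u; rewrite inE. Qed.

Lemma pn_wit (T : finType) (e : rel T) :
  {P | packing e P & packing_number e = #|P|}.
Proof.
rewrite /packing_number.
have := @eq_bigmax_cond _ [pred P : {set T} | packing e P] (fun P => #|P|).
case=> [|P hP ->]; last by exists P.
by apply/card_gt0P; exists set0; rewrite inE pack0.
Qed.

Lemma opn_wit (T : finType) (e : rel T) :
  {P | open_packing e P & open_packing_number e = #|P|}.
Proof.
rewrite /open_packing_number.
have := @eq_bigmax_cond _ [pred P : {set T} | open_packing e P] (fun P => #|P|).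
case=> [|P hP ->]; last by exists P.
by apply/card_gt0P; exists set0; rewrite inE opack0.
Qed.

Theorem mainTheorem13 (T1 T2 : finType) (e1 : rel T1) (e2 : rel T2) :
  simple_graph e1 -> simple_graph e2 ->
  no_isolated e1 -> no_isolated e2 ->
  maxn (open_packing_number e1 * packing_number e2)
       (open_packing_number e2 * packing_number e1)
  <= packing_number (direct_prod e1 e2).
Proof.
move=> g1 g2 _ _.
case: (opn_wit _ e1) => O1 hO1 ->; case: (opn_wit _ e2) => O2 hO2 ->.
case: (pn_wit _ e1) => P1 hP1 ->; case: (pn_wit _ e2) => P2 hP2 ->.
rewrite geq_max; apply/andP; split.
- rewrite -cardsX; apply: (leq_bigmax_cond (setX O1 P2)).
  exact: prodpack.
- rewrite mulnC -cardsX; apply: (leq_bigmax_cond (setX P1 O2)).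
  exact: prodpack2.
Qed.
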